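(* Define $\theta:\mathbb R\to\mathbb R$ by $\theta(x)=e^{-1/|x|}$ for $x\neq 0$ and $\theta(0)=0$. Let $q(x)=x+x^2$ and $p(x)=q(x)+\theta(x)=x+x^2+\theta(x)$. These are $C^\infty$ functions with $p(0)=q(0)=0$ and $p'(0)=q'(0)=1$, hence invertible near $0$; let $f=p^{-1}$ and $g=q^{-1}$ be their local inverses near $0$ (so $f,g$ are $C^\infty$, $f(0)=g(0)=0$, $f'(0)=g'(0)=1$, and their graphs do not coincide). Then $$\lim_{x\to 0^+}\frac{x - f^{-1}(g(x))}{g^{-1}(x)-f^{-1}(x)} = \lim_{x\to 0^+}\frac{x-p(g(x))}{q(x)-p(x)} = e^{-1}\neq 1.$$
   Context: Geometrically, with points $B=(x,g(x))$, $C=(f^{-1}(g(x)),g(x))$, $D=(g^{-1}(x),x)$, $E=(f^{-1}(x),x)$, the quotient above is the ratio of the (signed) lengths $|BC|/|ED|$; the result shows this ratio need not tend to $1$ when $f,g$ are merely $C^\infty$ rather than analytic. *)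

(* Defs.v *)
From Stdlib Require Import Reals.
From Coquelicot Require Import Coquelicot.
Open Scope R_scope.

Definition theta (x : R) : R :=
  if Req_EM_T x 0 then 0 else exp (- / Rabs x).

Definition q (x : R) : R := x + x ^ 2.
Definition p (x : R) : R := q x + theta x.

Definition local_inverse_at0 (q g : R -> R) : Prop :=
  exists delta : R, 0 < delta /\
    (forall x, Rabs x < delta -> g (q x) = x) /\
    (forall y, Rabs y < delta -> q (g y) = y).

(* Main.v *)
Require Import Defs.
From Stdlib Require Import Reals Lra.
From Coquelicot Require Import Coquelicot.
Open Scope R_scope.

Lemma theta_pos (t : R) : 0 < t -> theta t = exp (- / t).
Proof.
  intros Ht. unfold theta. destruct (Req_EM_T t 0) as [E|E]; [lra|].
  rewrite Rabs_pos_eq; lra.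
Qed.

Definition tt (x : R) := (sqrt (1 + 4 * x) - 1) / 2.
Definition hh (x : R) := exp (- / (1 + tt x)).

Lemma tt_props (x : R) : 0 < x -> 0 < tt x /\ tt x < x /\ tt x + tt x ^ 2 = x.
Proof.
  intros Hx. unfold tt.
  assert (Hs : 0 <= 1 + 4 * x) by lra.
  pose proof (sqrt_sqrt _ Hs) as Ess.
  pose proof (sqrt_pos (1 + 4 * x)) as Hp.
  set (s := sqrt (1 + 4 * x)) in *.
  repeat split.
  - nra.
  - nra.
  - nra.
Qed.

Theorem mainTheorem2 (g : R -> R) :
  local_inverse_at0 q g ->
  filterlim (fun x => (x - p (g x)) / (q x - p x)) (at_right 0) (locally (exp (-1)))
  /\ exp (-1) <> 1.
Proof.
  intros [delta [Hd [H1 H2]]]. split.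
  - apply filterlim_ext_loc with hh.
    + exists (mkposreal delta Hd). intros y Hy Hy0.
      assert (Hyd : y < delta).
      { unfold ball in Hy; simpl in Hy; unfold AbsRing_ball, abs, minus, plus, opp in Hy;
        simpl in Hy. rewrite Ropp_0, Rplus_0_r in Hy. rewrite Rabs_pos_eq in Hy; lra. }
      destruct (tt_props y Hy0) as [T1 [T2 T3]].
      assert (Eg : g y = tt y).
      { rewrite <- T3 at 1. apply H1. rewrite Rabs_pos_eq; lra. }
      rewrite Eg. unfold p. unfold q at 1. rewrite T3.
      replace (y - (y + theta (tt y))) with (- theta (tt y)) by ring.
      replace (q y - (q y + theta y)) with (- theta y) by ring.
      rewrite !theta_pos by lra.
      unfold hh.
      assert (E : - / (1 + tt y) = - / tt y - - / y).
      { set (t := tt y) in *. rewrite <- T3. field. split; lra. }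
      rewrite E. unfold Rminus. rewrite exp_plus, Ropp_involutive, !exp_Ropp. field. split; apply Rgt_not_eq, exp_pos.
    + assert (Hc : continuous hh 0).
      { apply (ex_derive_continuous (K:=R_AbsRing) (V:=R_NormedModule)). unfold hh, tt. auto_derive.
        rewrite Rmult_0_r, Rplus_0_r, sqrt_1. split; [lra|]. split; [|auto]. lra. }
      replace (exp (-1)) with (hh 0).
      * eapply filterlim_filter_le_1; [|exact Hc]. intros P HP. apply filter_le_within. exact HP.
      * unfold hh, tt. rewrite Rmult_0_r, Rplus_0_r, sqrt_1. f_equal. field.
  - intros E. rewrite <- exp_0 in E. apply exp_inv in E. lra.
Qed.
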